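(* Let $N\in\mathbb N$, $\Sigma_N=\{1,\ldots,N\}^{\mathbb Z}$, and let $\Sigma_A\subset\{1,\ldots,2N\}^{\mathbb Z}$ and $\pi\colon\Sigma_A\to\Sigma_N$ be as in the context. Every Markov measure $\lambda_0$ on $\Sigma_N$ has a unique symmetric extension, i.e. there is exactly one symmetric Markov measure $\lambda$ on $\Sigma_A$ with $\pi_*\lambda=\lambda_0$.
   Context: Given $C^1$-diffeomorphisms onto their images $f_1,\ldots,f_N$ of $[0,1]$, let $\mathcal I_P$ / $\mathcal I_R$ be the indices of orientation preserving / reversing $f_i$. $A=(a_{ij})_{i,j=1}^{2N}$ with $a_{ij}=1$ if ($i\in\mathcal I_P$, $j\le N$), or ($i\in\mathcal I_R$, $j>N$), or ($i-N\in\mathcal I_P$, $j>N$), or ($i-N\in\mathcal I_R$, $j\le N$), else $0$; $\Sigma_A$ the set of $\omega\in\{1,\ldots,2N\}^{\mathbb Z}$ with $a_{\omega_n\omega_{n+1}}=1$ for all $n$; $\pi(\omega)_n=\overline{\omega_n}$ with $\overline i=i$ for $i\le N$, $\overline i=i-N$ otherwise. A Markov measure on $\Sigma_A$ is given by a probability vector $(p_1,\ldots,p_{2N})$ and a stochastic matrix $(P_{ij})$ compatible with $A$, via $\lambda(\{\eta\colon\eta_k=\omega_k,\ m\le k\le n\})=p_{\omega_m}P_{\omega_m\omega_{m+1}}\cdots P_{\omega_{n-1}\omega_n}$. It is symmetric if $p_i=p_{i+N}$, $P_{ij}=P_{(i+N)(j+N)}$ and $P_{i(j+N)}=P_{(i+N)j}$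 for all $i,j=1,\ldots,N$. *)

(* Defs.v *)
From HB Require Import structures.
From mathcomp Require Import all_boot all_order all_algebra.
From mathcomp Require Import all_classical all_reals all_analysis.
Set Implicit Arguments. Unset Strict Implicit. Unset Printing Implicit Defensive.
Import Order.TTheory GRing.Theory Num.Theory.
Local Open Scope classical_set_scope.
Local Open Scope ring_scope.

(* 'I_n.+1 is pointed by 0 (needed by the generated-sigma-algebra construction) *)
HB.instance Definition _ (n : nat) := isPointed.Build 'I_n.+1 ord0.

Definition coord_sets (S : Type) : set (set (int -> S)) :=
  fun A => exists (k : int) (a : S), A = [set w | w k = a].

Definition Shift (S : Type) := g_sigma_algebraType (@coord_sets S).

Definition cylinder (S : Type) (w : int -> S) (m : int) (len : nat) : set (int -> S) :=
  [set eta | forall t : nat, (t <= len)%N -> eta (m + t%:Z) = w (m + t%:Z)].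

Section Markov.
Variables (R : realType) (k : nat).

Definition prob_vector (p : 'I_k -> R) : Prop :=
  (forall i, 0 <= p i) /\ \sum_(i < k) p i = 1.

Definition stochastic (P : 'I_k -> 'I_k -> R) : Prop :=
  (forall i j, 0 <= P i j) /\ (forall i, \sum_(j < k) P i j = 1).

Definition compatible (adm : 'I_k -> 'I_k -> bool) (P : 'I_k -> 'I_k -> R) : Prop :=
  forall i j, ~~ adm i j -> P i j = 0.

Definition markov_weight (p : 'I_k -> R) (P : 'I_k -> 'I_k -> R) (w : int -> 'I_k)
    (m : int) (len : nat) : R :=
  p (w m) * \prod_(t < len) P (w (m + t%:Z)) (w (m + t%:Z + 1)).

Definition markov_with (adm : 'I_k -> 'I_k -> bool) (p : 'I_k -> R)
    (P : 'I_k -> 'I_k -> R) (mu : set (int -> 'I_k) -> \bar R) : Prop :=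
  [/\ prob_vector p, stochastic P, compatible adm P &
      forall (w : int -> 'I_k) (m : int) (len : nat),
        mu (cylinder w m len) = (markov_weight p P w m len)%:E].
End Markov.

Section Lift.
Variable N : nat.

(* bar i = i for i in the first copy, i - N for i in the second copy (0-indexed) *)
Definition bar (i : 'I_(N + N)) : 'I_N :=
  match fintype.split i with inl j => j | inr j => j end.

(* orient i = true iff f_i is orientation preserving (i in I_P) *)
Definition adjA (orient : 'I_N -> bool) (i j : 'I_(N + N)) : bool :=
  match fintype.split i with
  | inl i' => if orient i' then (j < N)%N else (N <= j)%N
  | inr i' => if orient i' then (N <= j)%N else (j < N)%N
  end.

Definition piA (w : int -> 'I_(N + N)) : int -> 'I_N := fun n => bar (w n).

Definition symmetric_params (R : realType) (p : 'I_(N + N) -> R)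
    (P : 'I_(N + N) -> 'I_(N + N) -> R) : Prop :=
  forall i j : 'I_N,
    [/\ p (lshift N i) = p (rshift N i),
        P (lshift N i) (lshift N j) = P (rshift N i) (rshift N j) &
        P (lshift N i) (rshift N j) = P (rshift N i) (lshift N j)].
End Lift.

Definition markov_full (R : realType) (N : nat) (mu : set (int -> 'I_N) -> \bar R) : Prop :=
  exists (q : 'I_N -> R) (Q : 'I_N -> 'I_N -> R), markov_with (fun _ _ => true) q Q mu.

Definition sym_markov_A (R : realType) (N : nat) (orient : 'I_N -> bool)
    (mu : set (int -> 'I_(N + N)) -> \bar R) : Prop :=
  exists (p : 'I_(N + N) -> R) (P : 'I_(N + N) -> 'I_(N + N) -> R),
    markov_with (adjA orient) p P mu /\ symmetric_params p P.

(* pi_* lambda = lambda0 (on measurable sets); here N = n.+1 (the measurable-space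
   construction needs a nonempty alphabet) *)
Definition push_eq (R : realType) (n : nat)
    (lam : set (Shift 'I_(n.+1 + n.+1)) -> \bar R) (lam0 : set (Shift 'I_n.+1) -> \bar R) : Prop :=
  forall B : set (Shift 'I_n.+1), measurable B -> lam (@piA n.+1 @^-1` B) = lam0 B.

(* Main.v *)
Require Import Defs.
From HB Require Import structures.
From mathcomp Require Import all_boot all_order all_algebra.
From mathcomp Require Import all_classical all_reals all_analysis.
From mathcomp Require Import zify ring lra.
Set Implicit Arguments. Unset Strict Implicit. Unset Printing Implicit Defensive.
Import Order.TTheory GRing.Theory Num.Theory.
Local Open Scope classical_set_scope.
Local Open Scope ring_scope.

Lemma coord_meas (k : nat) (j : int) (P : 'I_k.+1 -> Prop) :
  measurable [set eta : Shift 'I_k.+1 | P (eta j)].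
Proof.
have -> : [set eta : Shift 'I_k.+1 | P (eta j)] =
   \bigcup_(i : nat) [set eta | P (eta j) /\ eta j = inord i].
  apply/seteqP; split => eta /=; last by case=> i _ [].
  by move=> Pe; exists (eta j) => //; rewrite inord_val.
apply: bigcupT_measurable => i.
case: (pselect (P (inord i))) => HP.
  have -> : [set eta : Shift 'I_k.+1 | P (eta j) /\ eta j = inord i] = [set eta | eta j = inord i].
    by apply/seteqP; split => eta /= => [[]//|->].
  by apply: sub_sigma_algebra; exists j, (inord i).
have -> : [set eta : Shift 'I_k.+1 | P (eta j) /\ eta j = inord i] = set0.
  by apply/seteqP; split => eta //= [+ E]; rewrite E.
exact: measurable0.
Qed.

Lemma window_meas (k : nat) (j : int) (len : nat) (P : nat -> 'I_k.+1 -> Prop) :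
  measurable [set eta : Shift 'I_k.+1 | forall t, (t <= len)%N -> P t (eta (j + t%:Z))].
Proof.
have -> : [set eta : Shift 'I_k.+1 | forall t, (t <= len)%N -> P t (eta (j + t%:Z))] =
  \bigcap_(t in [set t | (t <= len)%N]) [set eta | P t (eta (j + t%:Z))].
  by apply/seteqP; split => eta /= H t; apply: H.
by apply: bigcap_measurableType => t _; apply: coord_meas.
Qed.

Lemma cyl_meas (k : nat) (w : int -> 'I_k.+1) m len :
  measurable (cylinder w m len : set (Shift 'I_k.+1)).
Proof. exact: (window_meas m len (fun t x => x = w (m + t%:Z))). Qed.

Lemma xor_meas (k : nat) (g h : Shift 'I_k.+1 -> bool) :
  (forall b, measurable [set x | g x = b]) -> (forall b, measurable [set x | h x = b]) ->
  forall b, measurable [set x | g x (+) h x = b].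
Proof.
move=> mg mh b.
have -> : [set x | g x (+) h x = b] =
  ([set x | g x = b] `&` [set x | h x = false]) `|` ([set x | g x = ~~ b] `&` [set x | h x = true]).
  apply/seteqP; split => x /=.
    by case: (g x); case: (h x); case: b => //= _; first [by left | by right].
  by case=> -[-> ->]; case: b.
by apply: measurableU; apply: measurableI.
Qed.

Fixpoint parP (f : int -> bool) (m : nat) : bool :=
  if m is m'.+1 then parP f m' (+) f m'%:Z else false.
Fixpoint parM (f : int -> bool) (m : nat) : bool :=
  if m is m'.+1 then parM f m' (+) f (Negz m'.+1) else f (Negz 0).
Definition parb f (k : int) : bool :=
  match k with Posz m => parP f m | Negz m => parM f m end.

Lemma parbS f k : parb f (k + 1) = parb f k (+) f k.
Proof.
case: k => [m|[|m]].
- by have -> : (Posz m + 1 = Posz m.+1)%R by lia.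
- by rewrite /= addbb.
- have -> : (Negz m.+1 + 1 = Negz m)%R by rewrite !NegzE; lia.
  by rewrite /= -addbA addbb addbF.
Qed.

Lemma parbS' f k : parb f k = parb f (k + 1) (+) f k.
Proof. by rewrite parbS -addbA addbb addbF. Qed.

Section Lift.
Variables (n : nat) (orient : 'I_n.+1 -> bool).
Local Notation N := n.+1.

Definition side (a : 'I_(N + N)) : bool := (N <= a)%N.
Definition mk (s : bool) (x : 'I_N) : 'I_(N + N) := if s then rshift N x else lshift N x.

Lemma bar_mk s x : bar (mk s x) = x.
Proof.
rewrite /bar /mk; case: s.
  by have := unsplitK (inr x : 'I_N + 'I_N) => /= ->.
by have := unsplitK (inl x : 'I_N + 'I_N) => /= ->.
Qed.

Lemma side_mk s x : side (mk s x) = s.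
Proof. by rewrite /side /mk; case: s => /=; [rewrite leq_addr | rewrite leqNgt ltn_ord]. Qed.

Lemma mk_side_bar a : mk (side a) (bar a) = a.
Proof.
rewrite /side /bar /mk; case: splitP => [j|k] /= Ea; apply: val_inj; rewrite /= Ea.
  by rewrite leqNgt ltn_ord.
by rewrite leq_addr.
Qed.

Lemma mk_eq s x a : mk s x = a <-> s = side a /\ x = bar a.
Proof.
split; first by move<-; rewrite side_mk bar_mk.
by case=> -> ->; rewrite mk_side_bar.
Qed.

Lemma adj_side a b : adjA orient a b = (side b == side a (+) ~~ orient (bar a)).
Proof.
rewrite /adjA /side /bar; case: (splitP a) => [j|k] /= Ea; rewrite Ea.
  rewrite (leqNgt N j) ltn_ord /=.
  by case: (orient j); rewrite /= ?ltnNge; case: (N <= b)%N.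
rewrite leq_addr /=.
by case: (orient k); rewrite /= ?ltnNge; case: (N <= b)%N.
Qed.

Definition par (om : int -> 'I_N) (k : int) := parb (fun t => ~~ orient (om t)) k.
Arguments par : simpl never.
Definition lift (c : bool) (om : int -> 'I_N) : int -> 'I_(N + N) :=
  fun k => mk (c (+) par om k) (om k).

Lemma lift_adj c om k : adjA orient (lift c om k) (lift c om (k + 1)).
Proof. by rewrite adj_side /lift !side_mk bar_mk /par parbS addbA eqxx. Qed.

Lemma piA_lift c om : piA (lift c om) = om.
Proof. by apply/funext => k; rewrite /piA /lift bar_mk. Qed.

Lemma par_meas k b : measurable [set om : Shift 'I_N | par om k = b].
Proof.
have mf : forall j b, measurable [set om : Shift 'I_N | ~~ orient (om j) = b].
  by move=> j b'; apply: (coord_meas j (fun x => ~~ orient x = b')).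
move: b; case: k => m.
  elim: m => [|m IH] b.
    exact: (coord_meas 0 (fun _ => false = b)).
  have -> : [set om : Shift 'I_N | par om m.+1 = b] =
            [set om | par om m (+) ~~ orient (om m) = b].
    have E om : par om (Posz m.+1) = par om m (+) ~~ orient (om m).
      by rewrite /par (_ : Posz m.+1 = Posz m + 1) ?parbS //; lia.
    by apply/seteqP; split => om; rewrite /= E.
  by apply: xor_meas => //; exact: mf.
elim: m => [|m IH] b.
  exact: (coord_meas (Negz 0) (fun x => ~~ orient x = b)).
have -> : [set om : Shift 'I_N | par om (Negz m.+1) = b] =
          [set om | par om (Negz m) (+) ~~ orient (om (Negz m.+1)) = b].
  have E om : par om (Negz m.+1) = par om (Negz m) (+) ~~ orient (om (Negz m.+1)).
    by rewrite /par parbS' (_ : Negz m.+1 + 1 = Negz m) // !NegzE; lia.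
  by apply/seteqP; split => om; rewrite /= E.
by apply: xor_meas => //; exact: mf.
Qed.

Lemma lift_meas c : measurable_fun [set: Shift 'I_N] (lift c : Shift 'I_N -> Shift 'I_(N + N)).
Proof.
apply: (@measurability _ _ (Shift 'I_N) (Shift 'I_(N + N)) setT (lift c) (@coord_sets _)) => //.
move=> _ [B [j [a ->]] <-]; rewrite setTI.
have -> : lift c @^-1` [set eta | eta j = a] =
  [set om : Shift 'I_N | par om j = c (+) side (a : 'I_(N + N))] `&` [set om | om j = bar (a : 'I_(N + N))].
  apply/seteqP; split => om /=; rewrite /lift mk_eq.
    by case=> <- ->; rewrite addKb.
  by case=> -> ->; rewrite addKb.
apply: measurableI; [exact: par_meas | idtac].
change (measurable [set om : Shift 'I_N | (fun x => x = bar (a : 'I_(N + N))) (om j)]).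
exact: coord_meas.
Qed.

End Lift.

Lemma half_ge0 (R : realType) : (0 <= 2^-1 :> R).
Proof. by rewrite invr_ge0 ler0n. Qed.

Section Lam.
Variables (R : realType) (n : nat) (orient : 'I_n.+1 -> bool)
  (lam0 : probability (Shift 'I_n.+1) R).
Local Notation N := n.+1.
Local Open Scope ereal_scope.

Section PL.
Variable c : bool.
Definition plift (A : set (Shift 'I_(N + N))) : \bar R :=
  lam0 (lift orient c @^-1` A).

Let plift0 : plift set0 = 0.
Proof. by rewrite /plift preimage_set0 measure0. Qed.

Let plift_ge0 A : 0 <= plift A.
Proof. exact: measure_ge0. Qed.

Let plift_sa : semi_sigma_additive plift.
Proof.
have mf := lift_meas orient c.
move=> F mF tF mUF; rewrite /plift preimage_bigcup.
apply: measure_semi_sigma_additive.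
- by move=> k; rewrite -[X in measurable X]setTI; exact: mf.
- apply/trivIsetP => /= i j _ _ ij; rewrite -preimage_setI.
  by move/trivIsetP : tF => /(_ _ _ _ _ ij) ->//; rewrite preimage_set0.
- by rewrite -preimage_bigcup -[X in measurable X]setTI; exact: mf.
Qed.

HB.instance Definition _ := isMeasure.Build _ _ _ plift
  plift0 plift_ge0 plift_sa.
End PL.

Definition hlf : {nonneg R} := NngNum (half_ge0 R).

Definition lamF : set (Shift 'I_(N + N)) -> \bar R :=
  measure_add (mscale hlf (plift false)) (mscale hlf (plift true)).

Lemma lamFE A : lamF A = (2^-1)%:E * plift false A + (2^-1)%:E * plift true A.
Proof. by rewrite /lamF measure_addE. Qed.

Let lamF0 : lamF set0 = 0.
Proof. by rewrite lamFE !measure0 !mule0 adde0. Qed.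
Let lamF_ge0 A : 0 <= lamF A.
Proof. by rewrite lamFE adde_ge0 // mule_ge0 // lee_fin half_ge0. Qed.
Let lamF_sa : semi_sigma_additive lamF.
Proof. exact: (@measure_semi_sigma_additive _ _ _ (measure_add (mscale hlf (plift false)) (mscale hlf (plift true)))). Qed.

HB.instance Definition _ := isMeasure.Build _ _ _ lamF lamF0 lamF_ge0 lamF_sa.

Let lamF_setT : lamF setT = 1.
Proof.
rewrite lamFE /plift !preimage_setT probability_setT -EFinD; congr (_%:E).
by rewrite mulr1 [RHS](splitr 1) mul1r.
Qed.

HB.instance Definition _ := Measure_isProbability.Build _ _ _ lamF lamF_setT.

Definition lamP : probability (Shift 'I_(N + N)) R := lamF.



Lemma half_half : (2^-1 + 2^-1 = 1 :> R)%R.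
Proof. by rewrite [RHS](splitr 1) mul1r. Qed.

Lemma lamPE A : lamP A = (2^-1)%:E * plift false A + (2^-1)%:E * plift true A.
Proof. exact: lamFE. Qed.

Lemma succ_int (m : int) (t : nat) : (m + (t.+1)%:Z = m + t%:Z + 1)%R.
Proof. lia. Qed.

Lemma side_l i : side (lshift N i) = false. Proof. exact: (side_mk false i). Qed.
Lemma side_r i : side (rshift N i) = true. Proof. exact: (side_mk true i). Qed.
Lemma bar_l i : bar (lshift N i) = i. Proof. exact: (bar_mk false i). Qed.
Lemma bar_r i : bar (rshift N i) = i. Proof. exact: (bar_mk true i). Qed.

Lemma lamP_push : push_eq (lamP) lam0.
Proof.
move=> B mB; rewrite lamPE /plift.
have E c : lift orient c @^-1` (@piA N @^-1` B) = B.
  by apply/seteqP; split => om /=; rewrite piA_lift.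
rewrite !E -(fineK (fin_num_measure lam0 B mB)) -!EFinM -EFinD; congr (_%:E).
by rewrite -mulrDl half_half mul1r.
Qed.

Definition admW (w : int -> 'I_(N + N)) (m : int) (len : nat) :=
  forall t, (t < len)%N -> adjA orient (w (m + t%:Z)%R) (w (m + t%:Z + 1)%R).

Lemma lift_cyl c (w : int -> 'I_(N + N)) m len : admW w m len ->
  lift orient c @^-1` cylinder w m len =
  cylinder (@piA N w) m len `&` [set om | par orient om m = c (+) side (w m)].
Proof.
move=> aw; apply/seteqP; split => om /=.
  move=> H; split.
    by move=> t ht; rewrite /piA -(H t ht) /lift bar_mk.
  have := H 0%N isT; rewrite addr0 /lift => /mk_eq [<- _].
  by rewrite addKb.
case=> Hv Hp.
have S : forall t, (t <= len)%N -> side (lift orient c om (m + t%:Z)%R) = side (w (m + t%:Z)%R).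
  elim=> [|t IH] ht.
    by rewrite addr0 /lift side_mk Hp addKb.
  have ht' : (t < len)%N by [].
  rewrite succ_int.
  have := lift_adj orient c om (m + t%:Z)%R; rewrite adj_side => /eqP ->.
  have := aw t ht'; rewrite adj_side => /eqP ->.
  rewrite (IH (ltnW ht')); congr (_ (+) ~~ orient _).
  by rewrite /lift bar_mk (Hv t (ltnW ht')).
move=> t ht; rewrite -[LHS]mk_side_bar -[RHS]mk_side_bar S //.
by rewrite /lift bar_mk (Hv t ht).
Qed.

Lemma lift_cyl0 c (w : int -> 'I_(N + N)) m len : ~ admW w m len ->
  lift orient c @^-1` cylinder w m len = set0.
Proof.
move=> naw; apply/seteqP; split => om //= H; apply: naw => t ht.
have h1 := H t (ltnW ht); have h2 := H t.+1 ht.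
rewrite -h1 -succ_int -h2 succ_int; exact: lift_adj.
Qed.

Variables (q : 'I_N -> R) (Q : 'I_N -> 'I_N -> R).
Hypothesis Hm : markov_with (fun _ _ => true) q Q lam0.

Definition pA (a : 'I_(N + N)) : R := (q (bar a) / 2)%R.
Definition PA (a b : 'I_(N + N)) : R := if adjA orient a b then Q (bar a) (bar b) else 0%R.

Lemma lamP_cyl (w : int -> 'I_(N + N)) m len :
  lamP (cylinder w m len) = (markov_weight pA PA w m len)%:E.
Proof.
case: Hm => _ _ _ Hw0.
case: (pselect (admW w m len)) => aw; last first.
  rewrite lamPE /plift !lift_cyl0 // measure0 mule0 adde0.
  have [t [ht hadj]] : exists t, (t < len)%N /\ ~~ adjA orient (w (m + t%:Z)%R) (w (m + t%:Z + 1)%R).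
    apply: contrapT => NE; apply: aw => t ht; apply/negPn/negP => hn; apply: NE; by exists t.
  rewrite /markov_weight (bigD1 (Ordinal ht)) //= {1}/PA (negbTE hadj) mul0r mulr0 //.
rewrite lamPE /plift !lift_cyl //.
set C := cylinder _ m len.
have mC : measurable (C : set (Shift 'I_N)) by exact: cyl_meas.
have mE c : measurable [set om : Shift 'I_N | par orient om m = c (+) side (w m)] by exact: par_meas.
rewrite -ge0_muleDr ?measure_ge0 // -measureU //; first last.
- by apply/seteqP; split => om //= [[_ h1] [_ h2]]; move: h1 h2 => -> /=; case: (side (w m)).
- exact: measurableI.
- exact: measurableI.
rewrite -setIUr (_ : _ `|` _ = setT); last first.
  by apply/seteqP; split => om //= _; case: (par orient om m); case: (side (w m)); first [by left | by right].
rewrite setIT /C [X in (_ * X)%E](_ : _ = (markov_weight q Q (@piA N w) m len)%:E);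
  last exact: Hw0.
rewrite -EFinM; congr (_%:E).
rewrite /markov_weight /pA mulrA [(_ * q _)%R]mulrC; congr (_ * _)%R.
apply: eq_bigr => t _; rewrite /PA aw //.
Qed.

Lemma lamP_sym : sym_markov_A orient (lamP).
Proof.
case: Hm => [[q0 q1] [Q0 Q1] _ _].
exists pA, PA; split; last first.
  move=> i j; rewrite /pA /PA !adj_side !side_l !side_r !bar_l !bar_r.
  by split => //; case: (orient i).
split.
- split; first by move=> a; rewrite /pA divr_ge0.
  rewrite big_split_ord /=.
  under eq_bigr do rewrite /pA bar_l.
  under [X in (_ + X)%R]eq_bigr do rewrite /pA bar_r.
  by rewrite -!mulr_suml q1 -splitr.
- split; first by move=> a b; rewrite /PA; case: ifP.
  move=> a; rewrite big_split_ord /=.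
  under eq_bigr do rewrite /PA adj_side side_l bar_l.
  under [X in (_ + X)%R]eq_bigr do rewrite /PA adj_side side_r bar_r.
  case: (side a (+) ~~ orient (bar a)) => /=.
    by rewrite big1 ?add0r // Q1.
  by rewrite [X in (_ + X)%R]big1 ?addr0 // Q1.
- by move=> a b /negbTE hab; rewrite /PA hab.
- exact: lamP_cyl.
Qed.

End Lam.

Section Uniq.
Variables (R : realType) (n : nat) (orient : 'I_n.+1 -> bool)
  (lam0 : probability (Shift 'I_n.+1) R).
Local Notation N := n.+1.
Variable X : probability (Shift 'I_(N + N)) R.
Hypotheses (HX : sym_markov_A orient X) (HXp : push_eq X lam0).
Local Open Scope ereal_scope.

Definition flip (a : 'I_(N + N)) := mk (~~ side a) (bar a).

Lemma X_cyl_nadm (w : int -> 'I_(N + N)) m len : ~ admW orient w m len ->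
  X (cylinder w m len) = 0.
Proof.
case: HX => p [P [[_ _ comp Hw] _]] aw.
have [t [ht hadj]] : exists t, (t < len)%N /\ ~~ adjA orient (w (m + t%:Z)%R) (w (m + t%:Z + 1)%R).
  apply: contrapT => NE; apply: aw => t ht; apply/negPn/negP => hn; apply: NE; by exists t.
rewrite Hw /markov_weight (bigD1 (Ordinal ht)) //= comp // mul0r mulr0 //.
Qed.

Lemma X_cyl_adm (w : int -> 'I_(N + N)) m len : admW orient w m len ->
  X (cylinder w m len) + X (cylinder w m len) = lam0 (cylinder (@piA N w) m len).
Proof.
case: HX => p [P [[_ _ comp Hw] sym]] aw.
have pf a : p (flip a) = p a.
  rewrite /flip -[in RHS](mk_side_bar a); have [h1 _ _] := sym (bar a) (bar a).
  by case: (side a); rewrite /mk /= h1.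
have Pg s t x y : P (mk (~~ s) x) (mk (~~ t) y) = P (mk s x) (mk t y).
  have [_ h2 h3] := sym x y.
  by case: s; case: t; rewrite /mk /= ?h2 ?h3.
have Pf a b : P (flip a) (flip b) = P a b.
  by rewrite /flip -[in RHS](mk_side_bar a) -[in RHS](mk_side_bar b) Pg.
pose fw := fun k => flip (w k).
have Efw : X (cylinder fw m len) = X (cylinder w m len).
  rewrite !Hw /markov_weight /fw pf; congr (_ * _)%R%:E.
  by apply: eq_bigr => t _; rewrite Pf.
pose Pv : set (Shift 'I_(N + N)) := @piA N @^-1` cylinder (@piA N w) m len.
have mPv : measurable Pv.
  exact: (@window_meas (n + N) m len (fun t (x : 'I_(N + N)) => bar x = @piA N w (m + t%:Z)%R)).
have XPv : X Pv = lam0 (cylinder (@piA N w) m len) by apply: HXp; exact: cyl_meas.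
have mcw : measurable (cylinder w m len : set (Shift 'I_(N + N))) by exact: cyl_meas.
have mcfw : measurable (cylinder fw m len : set (Shift 'I_(N + N))) by exact: cyl_meas.
have disj : cylinder w m len `&` cylinder fw m len = set0.
  apply/seteqP; split => eta //= [h1 h2].
  have := h1 0%N isT; have := h2 0%N isT; rewrite !addr0 => -> e.
  by have := congr1 (@side n) e; rewrite /fw /flip side_mk; case: (side (w m)).
have XU : X (cylinder w m len `|` cylinder fw m len) = X (cylinder w m len) + X (cylinder fw m len).
  exact: measureU.
have sub1 : cylinder w m len `|` cylinder fw m len `<=` Pv.
  move=> eta [] h t ht; rewrite /piA h //.
  by rewrite /fw /flip bar_mk.
pose leaf t i j := [set eta : Shift 'I_(N + N) | (t < len)%N /\
  ~~ adjA orient (inord i) (inord j) /\ eta (m + t%:Z)%R = inord i /\ eta (m + t%:Z + 1)%R = inord j].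
have negB : X.-negligible (\bigcup_t \bigcup_i \bigcup_j leaf t i j).
  apply: negligible_bigcup => t; apply: negligible_bigcup => i; apply: negligible_bigcup => j.
  case: (pselect ((t < len)%N /\ ~~ adjA orient (inord i) (inord j))) => [[ht hadj]|hn]; last first.
    apply: (@negligibleS _ _ _ X set0); last exact: negligible_set0.
    by move=> eta [h1 [h2 _]]; apply: hn.
  pose u := fun k : int => if k == (m + t%:Z)%R then (inord i : 'I_(N + N)) else inord j.
  have ne : ((m + t%:Z + 1)%R == (m + t%:Z)%R) = false by apply/negbTE/eqP; lia.
  apply: (@negligibleS _ _ _ X (cylinder u (m + t%:Z)%R 1%N)).
    move=> eta [_ [_ [e1 e2]]] t'; case: t' => [|[|//]] _.
      by rewrite addr0 /u eqxx.
    by rewrite /u ne.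
  apply/negligibleP; first exact: cyl_meas.
  have := Hw u (m + t%:Z)%R 1%N; rewrite /markov_weight big_ord1 /= !addr0 /u eqxx ne comp // mulr0 => HH; exact: HH.
case: negB => M [mM XM0 BM].
have sub2 : Pv `<=` (cylinder w m len `|` cylinder fw m len) `|` M.
  move=> eta Heta.
  have hb t : (t <= len)%N -> bar (eta (m + t%:Z)%R) = bar (w (m + t%:Z)%R) := Heta t.
  case: (pselect (exists t, (t < len)%N /\ ~~ adjA orient (eta (m + t%:Z)%R) (eta (m + t%:Z + 1)%R))).
    move=> [t [ht hadj]]; right; apply: BM.
    exists t => //; exists (nat_of_ord (eta (m + t%:Z)%R)) => //.
    exists (nat_of_ord (eta (m + t%:Z + 1)%R)) => //; rewrite /leaf /= !(@inord_val (n + N)); split => //.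
  move=> NE; left.
  have inv : forall t, (t <= len)%N ->
      side (eta (m + t%:Z)%R) (+) side (w (m + t%:Z)%R) = side (eta m) (+) side (w m).
    elim=> [|t IH] ht; first by rewrite addr0.
    have ht' : (t < len)%N by [].
    have ae : adjA orient (eta (m + t%:Z)%R) (eta (m + t%:Z + 1)%R).
      by apply/negPn/negP => hn; apply: NE; exists t.
    rewrite succ_int; move: ae; rewrite adj_side => /eqP ->.
    have := aw t ht'; rewrite adj_side => /eqP ->.
    by rewrite (hb t (ltnW ht')) addbACA addbb addbF IH // ltnW.
  case: (boolP (side (eta m) == side (w m))) => E; [left|right] => t ht.
    have e : side (eta (m + t%:Z)%R) = side (w (m + t%:Z)%R).
      by move: (inv t ht); rewrite (eqP E) addbb; case: (side (eta _)); case: (side (w _)).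
    by rewrite -[LHS]mk_side_bar -[RHS]mk_side_bar e hb.
  have e : side (eta (m + t%:Z)%R) = ~~ side (w (m + t%:Z)%R).
    have x : side (eta m) (+) side (w m) = true by move: E; case: (side (eta m)); case: (side (w m)).
    by move: (inv t ht); rewrite x; case: (side (eta _)); case: (side (w _)).
  by rewrite -[LHS]mk_side_bar /fw /flip e hb.
have le1 : X Pv <= X (cylinder w m len `|` cylinder fw m len).
  rewrite -(@measureU0 _ _ _ X (cylinder w m len `|` cylinder fw m len) M) //; last exact: measurableU.
  apply: le_measure => //; rewrite ?inE //.
  by apply: measurableU => //; apply: measurableU.
have le2 : X (cylinder w m len `|` cylinder fw m len) <= X Pv.
  by apply: le_measure => //; rewrite ?inE //; apply: measurableU.
rewrite -XPv; apply/eqP; rewrite eq_le; apply/andP; split.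
  by rewrite -[X in X + _]Efw addeC -XU.
by rewrite -[X in _ + X]Efw -XU.
Qed.

End Uniq.

Section Gen.
Variable k : nat.

Definition Gp : set (set (Shift 'I_k.+1)) :=
  [set A | A = set0 \/ A = setT \/
     exists (w : int -> 'I_k.+1) (L : nat), A = cylinder w (- L%:Z)%R (L + L)%N].

Lemma cylI_sub (w1 w2 : int -> 'I_k.+1) L1 L2 : (L1 <= L2)%N ->
  Gp (cylinder w1 (- L1%:Z)%R (L1 + L1)%N `&` cylinder w2 (- L2%:Z)%R (L2 + L2)%N).
Proof.
move=> hL.
have idx t : (t <= L1 + L1)%N ->
    (- L1%:Z + t%:Z = - L2%:Z + (t + (L2 - L1))%N%:Z)%R /\ (t + (L2 - L1) <= L2 + L2)%N.
  by move=> ?; split; lia.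
case: (pselect (forall t, (t <= L1 + L1)%N ->
   w1 (- L1%:Z + t%:Z)%R = w2 (- L1%:Z + t%:Z)%R)) => H.
  right; right; exists w2, L2; apply/seteqP; split => eta; first by case.
  move=> h2; split => // t ht; have [e he] := idx t ht.
  by rewrite H // e (h2 _ he).
left; apply/seteqP; split => eta // [h1 h2]; apply: H => t ht.
have [e he] := idx t ht.
by rewrite -(h1 t ht) e (h2 _ he).
Qed.

Lemma Gp_setI : setI_closed Gp.
Proof.
have G0 : Gp set0 by left.
have Gc w L : Gp (cylinder w (- L%:Z)%R (L + L)%N) by right; right; exists w, L.
move=> A B [->|[->|[w1 [L1 ->]]]] [->|[->|[w2 [L2 ->]]]];
  rewrite ?set0I ?setI0 ?setTI ?setIT //; try exact: Gc; try (by right; left).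
case: (leqP L1 L2) => h; first exact: cylI_sub.
by rewrite setIC; apply: cylI_sub; exact: ltnW.
Qed.

Definition Tset (w : int -> 'I_k.+1) (L : nat) (F : seq nat) : set (Shift 'I_k.+1) :=
  [set eta | forall t, (t <= L + L)%N -> t \notin F ->
     eta (- L%:Z + t%:Z)%R = w (- L%:Z + t%:Z)%R].

Definition upd (w : int -> 'I_k.+1) (x : int) (a : 'I_k.+1) : int -> 'I_k.+1 :=
  fun y => if y == x then a else w y.

Lemma Tset_gen w L F : <<s Gp >> (Tset w L F).
Proof.
elim: F w => [|f F IH] w.
  apply: sub_sigma_algebra; right; right; exists w, L; apply/seteqP; split => eta H t ht.
    exact: H.
  by move=> _; apply: H.
rewrite (_ : Tset w L (f :: F) = \bigcup_i Tset (upd w (- L%:Z + f%:Z)%R (inord i)) L F).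
  by apply: sigma_algebra_bigcup => i; exact: IH.
apply/seteqP; split => eta H.
  exists (nat_of_ord (eta (- L%:Z + f%:Z)%R)) => // t ht tF; rewrite /upd; case: eqP => [E|NE].
    by rewrite inord_val E.
  have tF' : t \notin f :: F.
    by rewrite in_cons negb_or tF andbT; apply/eqP => tf; apply: NE; rewrite tf.
  exact: H ht tF'.
case: H => i _ H t ht; rewrite in_cons negb_or => /andP [tf tF].
have := H t ht tF; rewrite /upd; case: eqP => // E.
by exfalso; move/eqP: tf; apply; move: E; lia.
Qed.

Lemma coord_gen (j : int) (a : 'I_k.+1) : <<s Gp >> [set eta : Shift 'I_k.+1 | eta j = a].
Proof.
pose L := absz j; pose jj := absz (j + L%:Z)%R.
rewrite (_ : [set eta | eta j = a] = Tset (fun _ => a) L [seq t <- iota 0 (L + L).+1 | t != jj]).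
  exact: Tset_gen.
have Ej : (- L%:Z + jj%:Z = j)%R by rewrite /jj /L; lia.
have hj : (jj <= L + L)%N by rewrite /jj /L; lia.
apply/seteqP; split => eta H.
  move=> t ht; rewrite mem_filter mem_iota /= add0n ltnS ht andbT negbK => /eqP ->.
  by rewrite Ej.
by move: (H jj hj); rewrite mem_filter eqxx /= Ej; apply.
Qed.

Lemma meas_gen : (@measurable _ (Shift 'I_k.+1)) = <<s Gp >>.
Proof.
apply/seteqP; split.
  apply: smallest_sub; first exact: smallest_sigma_algebra.
  by move=> _ [j [a ->]]; exact: coord_gen.
apply: smallest_sub; first exact: sigma_algebra_measurable.
move=> A [->|[->|[w [L ->]]]]; [exact: measurable0 | exact: measurableT | exact: cyl_meas].
Qed.

End Gen.

Lemma fin_twice (R : realType) (x y : \bar R) : x \is a fin_num -> y \is a fin_num ->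
  (x + x = y + y)%E -> x = y.
Proof.
case: x => [x||] //; case: y => [y||] //= _ _; rewrite -!EFinD => -[h].
by congr (_%:E); lra.
Qed.

Theorem lemma3p13 (R : realType) (n : nat) (orient : 'I_n.+1 -> bool)
    (lam0 : probability (Shift 'I_n.+1) R) :
  markov_full lam0 ->
  exists lam : probability (Shift 'I_(n.+1 + n.+1)) R,
    [/\ sym_markov_A orient lam, push_eq lam lam0 &
        forall lam' : probability (Shift 'I_(n.+1 + n.+1)) R,
          sym_markov_A orient lam' -> push_eq lam' lam0 ->
          forall B : set (Shift 'I_(n.+1 + n.+1)), measurable B -> lam' B = lam B].
Proof.
move=> [q [Q Hm]].
have Hs := @lamP_sym R n orient lam0 q Q Hm.
have Hp := @lamP_push R n orient lam0.
exists (lamP orient lam0); split => // lam' Hs' Hp' B mB.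
refine (@measure_unique _ R (Shift 'I_(n.+1 + n.+1)) (@Gp (n + n.+1)%N) (fun _ => setT)
  (@meas_gen (n + n.+1)%N) (@Gp_setI (n + n.+1)%N) _ _ lam' (lamP orient lam0) _ _ B mB).
- by move=> _; right; left.
- by apply/seteqP; split => // x _; exists 0%N.
- move=> A [->|[->|[w [L ->]]]]; first by rewrite !measure0.
    by transitivity (1%R%:E : \bar R); [exact: probability_setT | symmetry; exact: probability_setT].
  case: (pselect (admW orient w (- L%:Z)%R (L + L)%N)) => aw.
    have h1 := X_cyl_adm Hs' Hp' aw; have h2 := X_cyl_adm Hs Hp aw.
    apply: fin_twice; [exact: fin_num_measure (cyl_meas _ _ _) | exact: fin_num_measure (cyl_meas _ _ _) |].
    by rewrite h1 h2.
  by transitivity (0%R%:E : \bar R); [exact: (X_cyl_nadm Hs' aw) | symmetry; exact: (X_cyl_nadm Hs aw)].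
- by move=> _ /=; rewrite (_ : lam' setT = (1%R%:E : \bar R)) ?ltry //; exact: probability_setT.
Qed.
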